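(* Let $0\leq k'\leq k$ and $0\leq \ell'\leq \ell$. Set $\mathcal{A}= \mathbb{C}\langle X_1,\ldots,X_k,Y_1,\ldots,Y_{\ell}\rangle$, $\mathcal{A}_1=\mathbb{C}\langle X_1,\ldots,X_k\rangle$, $\mathcal{A}_2=\mathbb{C}\langle Y_1,\ldots,Y_{\ell}\rangle$; let $\mathcal{I}_1$ be the ideal of $\mathcal{A}_1$ generated by $X_1,\ldots,X_{k'}$, $\mathcal{I}_2$ the ideal of $\mathcal{A}_2$ generated by $Y_1,\ldots,Y_{\ell'}$, and $\mathcal{I}$ the ideal of $\mathcal{A}$ generated by $\mathcal{I}_1\cup \mathcal{I}_2$. Let $\tau:\mathcal{A}\to\mathbb{C}$ be a unital linear functional and $\tau':\mathcal{A}\to\mathbb{C}$ a linear functional with $\tau'(1)=0$, such that $\mathcal{I}\subset \ker(\tau)$ and $\mathbb{C}\langle X_{k'+1},\ldots,X_k,Y_{\ell'+1},\ldots,Y_{\ell}\rangle\subset \ker(\tau')$. Assume that $(\mathcal{A}_1,\mathcal{I}\cap \mathcal{A}_1)$ and $(\mathcal{A}_2,\mathcal{I}\cap \mathcal{A}_2)$ are free of type $B$ in $(\mathcal{A},\tau,\mathcal{I},\tau'|_{\mathcal{I}})$. Then $\mathcal{A}_1$ and $\mathcal{A}_2$ are infinitesimally free with respect to $(\tau,\tau')$.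
   Context: Freeness of type $B$: for a unital linear functional $\tau$ on a unital algebra $\mathcal{A}$, an ideal $\mathcal{I}$ and a linear $\tau':\mathcal{I}\to\mathbb{C}$, and unital subalgebras $\mathcal{A}_1,\mathcal{A}_2$ with subspaces $V_h\subset\mathcal{I}\cap\mathcal{A}_h$ stable under two-sided multiplication by $\mathcal{A}_h$, $(\mathcal{A}_1,V_1)$ and $(\mathcal{A}_2,V_2)$ are free of type $B$ if $\mathcal{A}_1,\mathcal{A}_2$ are free w.r.t. $\tau$ and whenever $a_n\in\mathcal{A}_{i_n},\dots,a_1\in\mathcal{A}_{i_1}$, $v\in V_h$, $b_1\in\mathcal{A}_{j_1},\dots,b_m\in\mathcal{A}_{j_m}$ with consecutive indices in $i_n,\dots,i_1,h,j_1,\dots,j_m$ all different and all $a_r,b_s$ centered for $\tau$, one has $\tau'(a_n\cdots a_1vb_1\cdots b_m)=\tau(a_nb_m)\cdots\tau(a_1b_1)\tau'(v)$ if $n=m$ and $i_r=j_r$ for all $r$, and $0$ otherwise. Infinitesimal freeness w.r.t. $(\tau,\tau')$: whenever $a_j\in\mathcal{A}_{i_j}$ with consecutive indices different and $\tau(a_j)=0$ for all $j$, $\tau(a_1\cdots a_n)=0$ and $\tau'(a_1\cdots a_n)=\sum_{j=1}^n\tau(a_1\cdots a_{j-1}\tau'(a_j)a_{j+1}\cdots a_n)$. *)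

(* Defs.v *)
From HB Require Import structures.
From mathcomp Require Import all_boot all_order all_algebra.
From mathcomp Require Import finmap Rstruct complex monalg.

Set Implicit Arguments.
Unset Strict Implicit.
Unset Printing Implicit Defensive.

Import Order.TTheory GRing.Theory Num.Theory.
Local Open Scope ring_scope.

Definition CC : numClosedFieldType := (Rdefinitions.R[i])%C.

(* Two subalgebras are encoded as S : bool -> (A -> Prop):            *)
(*   S false = A_1, S true = A_2.                                      *)
(* A finite sequence a_1, ..., a_n with a_j in A_{i_j} is encoded as   *)
(* a list of pairs (i_j, a_j).                                         *)
Section Freeness.
Variable A : lalgType CC.

Definition alternating (s : seq (bool * A)) : bool :=
  sorted (fun x y => x.1 != y.1) s.

Definition centered_in (tau : A -> CC) (S : bool -> A -> Prop)
  (s : seq (bool * A)) : Prop :=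
  forall x, x \in s -> S x.1 x.2 /\ tau x.2 = 0.

Definition free (tau : A -> CC) (S : bool -> A -> Prop) : Prop :=
  forall s : seq (bool * A), s != [::] -> alternating s ->
    centered_in tau S s -> tau (\prod_(x <- s) x.2) = 0.

(* L = [:: (i_n, a_n); ...; (i_1, a_1)] (in product order),
   R = [:: (j_1, b_1); ...; (j_m, b_m)]; the product is
   a_n ... a_1 v b_1 ... b_m. *)
Definition free_typeB (tau tau' : A -> CC) (S V : bool -> A -> Prop) : Prop :=
  free tau S /\
  forall (L : seq (bool * A)) (h : bool) (v : A) (R : seq (bool * A)),
    alternating (L ++ (h, v) :: R) ->
    centered_in tau S (L ++ R) ->
    V h v ->
    tau' ((\prod_(x <- L) x.2) * v * (\prod_(x <- R) x.2)) =
      if (size L == size R) && (map fst (rev L) == map fst R) then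
        (\prod_(p <- zip (rev L) R) tau (p.1.2 * p.2.2)) * tau' v
      else 0.

Definition inf_free (tau tau' : A -> CC) (S : bool -> A -> Prop) : Prop :=
  forall s : seq (bool * A), s != [::] -> alternating s ->
    centered_in tau S s ->
    let a i := (nth (false, 0) s i).2 in
    tau (\prod_(i < size s) a i) = 0 /\
    tau' (\prod_(i < size s) a i) =
      \sum_(j < size s)
         tau (\prod_(i < size s) (if i == j then (tau' (a j))%:A else a i)).

Definition ideal_gen (B G : A -> Prop) : A -> Prop := fun p =>
  exists s : seq (A * A * A),
    (forall t, t \in s -> [/\ B t.1.1, G t.1.2 & B t.2]) /\
    p = \sum_(t <- s) t.1.1 * t.1.2 * t.2.

End Freeness.

(* Letters: inl i is X_{i+1}, inr j is Y_{j+1}.                        *)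
Definition letter (k l : nat) := ('I_k + 'I_l)%type.

Notation ncpoly k l := {malg CC[{fmonom (letter k l)}]}.

Definition Xv (k l : nat) (i : 'I_k) : ncpoly k l := << fmu (inl i : letter k l) >>.
Definition Yv (k l : nat) (j : 'I_l) : ncpoly k l := << fmu (inr j : letter k l) >>.

Definition polys_in (k l : nat) (P : pred (letter k l)) : ncpoly k l -> Prop :=
  fun p => forall m, m \in msupp p -> all P (m : seq (letter k l)).

Definition isX (k l : nat) (c : letter k l) : bool :=
  if c is inl _ then true else false.
Definition isY (k l : nat) (c : letter k l) : bool :=
  if c is inr _ then true else false.

Definition Alg1 k l := polys_in (@isX k l).
Definition Alg2 k l := polys_in (@isY k l).
Definition Alg (k l : nat) (b : bool) := if b then @Alg2 k l else @Alg1 k l.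

Definition Ideal1 k l (k' : nat) : ncpoly k l -> Prop :=
  ideal_gen (@Alg1 k l) (fun p => exists i : 'I_k, i < k' /\ p = Xv l i)%N.
Definition Ideal2 k l (l' : nat) : ncpoly k l -> Prop :=
  ideal_gen (@Alg2 k l) (fun p => exists j : 'I_l, j < l' /\ p = Yv k j)%N.
Definition Ideal k l k' l' : ncpoly k l -> Prop :=
  ideal_gen (fun _ => True) (fun p => Ideal1 k' p \/ Ideal2 l' p).

Definition KerAlg k l (k' l' : nat) : ncpoly k l -> Prop :=
  polys_in (fun c : letter k l =>
    match c with inl i => (k' <= i)%N | inr j => (l' <= j)%N end).

Definition Vsp k l k' l' (b : bool) : ncpoly k l -> Prop :=
  fun p => @Ideal k l k' l' p /\ @Alg k l b p.

(* Main.v *)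
Require Import Defs.
From HB Require Import structures.
From mathcomp Require Import all_boot all_order all_algebra.
From mathcomp Require Import finmap Rstruct complex monalg.
Set Implicit Arguments.
Unset Strict Implicit.
Unset Printing Implicit Defensive.
Import Order.TTheory GRing.Theory Num.Theory.
Local Open Scope ring_scope.


Section Polys.
Variables (k l : nat).
Local Notation A := (ncpoly k l).
Local Notation L := (letter k l).
Implicit Types (P : pred L) (p q : A).

Lemma polys_in0 P : polys_in P (0 : A).
Proof. by move=> m; rewrite msupp0. Qed.

Lemma polys_inD P p q : polys_in P p -> polys_in P q -> polys_in P (p + q).
Proof.
move=> hp hq m /(fsubsetP (msuppD_le p q)); rewrite in_fsetU => /orP[/hp|/hq] //.
Qed.

Lemma polys_inB P p q : polys_in P p -> polys_in P q -> polys_in P (p - q).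
Proof.
move=> hp hq m /(fsubsetP (msuppB_le p q)); rewrite in_fsetU => /orP[/hp|/hq] //.
Qed.

Lemma polys_inZ P c p : polys_in P p -> polys_in P (c *: p).
Proof. by move=> hp m /(fsubsetP (msuppZ_le c p)) /hp. Qed.

Lemma polys_in1 P : polys_in P (1 : A).
Proof.
move=> m; rewrite -mpolyC1E => /(fsubsetP (msuppC_le _)); rewrite inE => /eqP ->.
by rewrite fm1.
Qed.

Lemma polys_inM P p q : polys_in P p -> polys_in P q -> polys_in P (p * q).
Proof.
move=> hp hq m /msuppM_le [m1 [m2 [h1 h2 ->]]].
by rewrite fmM all_cat hp // hq.
Qed.

Lemma polys_inU P c (m : {fmonom L}) : all P m -> polys_in P << c *g m >>.
Proof. by move=> hm m' /(fsubsetP msuppU_le); rewrite inE => /eqP ->. Qed.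

Lemma polys_in_sum P (I : eqType) (r : seq I) (Q : pred I) (F : I -> A) :
  (forall i, i \in r -> Q i -> polys_in P (F i)) ->
  polys_in P (\sum_(i <- r | Q i) F i).
Proof.
move=> h; rewrite big_seq_cond; apply: big_ind.
- exact: polys_in0.
- exact: polys_inD.
by move=> i /andP[]; apply: h.
Qed.

Lemma mulUC (a c : CC) (m : {fmonom L}) : << a *g m >> * c%:MP = c *: << a *g m >> :> A.
Proof.
rewrite malgM_def fgmulUU mulm1; apply/malgP => m'.
by rewrite mcoeffZ !mcoeffU mulrnAr mulrC.
Qed.

Lemma mulrCst p (c : CC) : p * c%:MP = c *: p.
Proof.
rewrite [in LHS](monalgE p) [in RHS](monalgE p) big_distrl scaler_sumr; apply: eq_bigr => m _.
exact: mulUC.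
Qed.
End Polys.

Section Decomp.
Variables (k l k' l' : nat).
Local Notation A := (ncpoly k l).
Local Notation L := (letter k l).
Local Notation Id := (@Ideal k l k' l').
Implicit Types (p q : A).

Lemma Ideal0 : Id 0.
Proof. by exists [::]; split => //; rewrite big_nil. Qed.

Lemma IdealD p q : Id p -> Id q -> Id (p + q).
Proof.
move=> [s1 [h1 ->]] [s2 [h2 ->]]; exists (s1 ++ s2); split; last by rewrite big_cat.
by move=> t; rewrite mem_cat => /orP[/h1|/h2].
Qed.

Lemma Ideal_sum (I : eqType) (r : seq I) (Q : pred I) (F : I -> A) :
  (forall i, i \in r -> Q i -> Id (F i)) -> Id (\sum_(i <- r | Q i) F i).
Proof.
move=> h; rewrite big_seq_cond; apply: big_ind.
- exact: Ideal0.
- exact: IdealD.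
by move=> i /andP[]; apply: h.
Qed.

Lemma Ideal_gen x g y : (@Ideal1 k l k' g \/ @Ideal2 k l l' g) -> Id (x * g * y).
Proof.
move=> hg; exists [:: (x, g, y)]; split; last by rewrite big_seq1.
by move=> t; rewrite inE => /eqP -> /=.
Qed.

Lemma IdealMr p b : Id p -> Id (p * b).
Proof.
move=> [s [h ->]]; exists (map (fun t => (t.1.1, t.1.2, t.2 * b)) s); split.
  by move=> t /mapP [t' /h [h1 h2 h3] ->].
rewrite big_map big_distrl; apply: eq_bigr => t _; exact: esym (mulrA _ _ _).
Qed.

Definition Kl (c : L) : bool :=
  match c with inl i => (k' <= i)%N | inr j => (l' <= j)%N end.

Definition pr0 p : A := \sum_(m <- msupp p | all Kl m) << p@_m *g m >>.

Lemma pr0_ker p : KerAlg k' l' (pr0 p).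
Proof. by apply: polys_in_sum => m _ hm; apply: polys_inU. Qed.

Lemma pr0_alg P p : polys_in P p -> polys_in P (pr0 p).
Proof. by move=> hp; apply: polys_in_sum => m hm _; apply: polys_inU; apply: hp. Qed.

Lemma pr1_eq p : p - pr0 p = \sum_(m <- msupp p | ~~ all Kl m) << p@_m *g m >>.
Proof.
rewrite {1}(monalgE p) (bigID (fun m : {fmonom L} => all Kl m)) /=.
by rewrite addrC addrK.
Qed.

Lemma Ideal_mono c (m : {fmonom L}) : ~~ all Kl m -> Id << c *g m >>.
Proof.
case/allPn => x xm nKx.
have [u [w hm]] : exists u w, (m : seq L) = u ++ x :: w.
  by case/splitPr: xm => u w; exists u, w.
have -> : m = (mmul (mmul (FMonom u) (fmu x)) (FMonom w)).
  apply/eqP; rewrite fmP; apply/eqP; rewrite hm; change (u ++ x :: w = fmmul (fmmul (FMonom u) (fmu x)) (FMonom w) :> seq L).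
  by rewrite !fmmulE fmuE /= -catA.
have -> : << c *g (mmul (mmul (FMonom u) (fmu x)) (FMonom w)) >> =
   << c *g FMonom u >> * << fmu x >> * << FMonom w >> :> A.
  by rewrite !malgM_def !fgmulUU !mulr1.
apply: Ideal_gen; clear hm; case: x xm nKx => [i|j] _ /= hx; rewrite -ltnNge in hx.
  left; exists [:: (1, Xv l i, 1)]; split; last by rewrite big_seq1 mulr1 mul1r.
  move=> t; rewrite inE => /eqP -> /=; split; [exact: polys_in1| |exact: polys_in1].
  by exists i.
right; exists [:: (1, Yv k j, 1)]; split; last by rewrite big_seq1 mulr1 mul1r.
move=> t; rewrite inE => /eqP -> /=; split; [exact: polys_in1| |exact: polys_in1].
by exists j.
Qed.

Lemma pr1_ideal p : Id (p - pr0 p).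
Proof. by rewrite pr1_eq; apply: Ideal_sum => m _; apply: Ideal_mono. Qed.

End Decomp.



Section FreeLR.
Variables (k l : nat).
Local Notation A := (ncpoly k l).
Variable tau : {linear A -> CC^o}.
Variable S : bool -> A -> Prop.
Hypothesis tau1 : tau 1 = 1.
Hypothesis hfree : Defs.free tau S.
Hypothesis hS : forall h a b, S h a -> S h b -> S h (a * b - tau (a * b) *: 1).

Definition cond (L R : seq (bool * A)) :=
  (size L == size R) && (map fst (rev L) == map fst R).
Definition Zp (L R : seq (bool * A)) :=
  \prod_(p <- zip (rev L) R) tau (p.1.2 * p.2.2).

Lemma mulrZr (x y : A) (t : CC) : x * (t *: y) = t *: (x * y).
Proof. by rewrite -mul_malgC mulrA mulrCst scalerAl. Qed.

Lemma freeLR L : forall R h x, alternating (L ++ (h, x) :: R) ->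
  centered_in tau S (L ++ R) ->
  tau ((\prod_(y <- L) y.2) * \prod_(y <- R) y.2) = if cond L R then Zp L R else 0.
Proof.
elim/last_ind: L => [|L' [i a] IH] R h x halt hc.
  case: R halt hc => [|[j b] R'] halt hc.
    by rewrite !big_nil mul1r tau1 /cond /Zp /= big_nil.
  rewrite big_nil mul1r /cond /= hfree //.
  by move: halt; rewrite /alternating /= => /andP[].
case: R halt hc => [|[j b] R'] halt hc.
  rewrite big_nil mulr1 /cond size_rcons /= hfree //.
    by rewrite -size_eq0 size_rcons.
  by move: halt; rewrite /alternating => /cat_sorted2 [].
  by move: hc; rewrite cats0.
rewrite /cond /Zp rev_rcons /= size_rcons eqSS -cats1 big_cat big_seq1 big_cons /=.
move: halt; rewrite /alternating -cats1 -catA /= sorted_cat_cons /= => /and4P [hr hih hhj hp].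
have [eij|nij] := eqVneq i j; last first.
  rewrite eqseq_cons (negbTE nij) andFb andbF.
  have -> : \prod_(y <- L') y.2 * a * (b * \prod_(y <- R') y.2) =
     \prod_(y <- L' ++ (i, a) :: (j, b) :: R') y.2.
    by rewrite big_cat !big_cons -mulrA.
  apply: hfree.
  - by rewrite -size_eq0 size_cat /= addnS.
  - by rewrite /alternating sorted_cat_cons hr /= nij.
  - by move: hc; rewrite -cats1 -catA.
subst j; rewrite eqseq_cons eqxx /=.
have hcL : forall y, y \in L' ++ R' -> S y.1 y.2 /\ tau y.2 = 0.
  move=> y; rewrite mem_cat => /orP[hy|hy]; apply: hc.
    by rewrite mem_cat mem_rcons inE hy orbT.
  by rewrite mem_cat inE hy !orbT.
have ha : S i a /\ tau a = 0.
  by apply: (hc (i, a)); rewrite mem_cat mem_rcons inE eqxx.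
have hb : S i b /\ tau b = 0.
  by apply: (hc (i, b)); rewrite mem_cat inE eqxx orbT.
have hpa : forall z, path (fun x y : bool * A => x.1 != y.1) (i, z) R'.
  by move=> z; case: (R') hp.
have altL : alternating (L' ++ (i, a) :: R').
  by rewrite /alternating sorted_cat_cons hr hpa.
have := IH R' i a altL hcL.
set c := a * b - tau (a * b) *: 1.
have -> : \prod_(y <- L') y.2 * a * (b * \prod_(y <- R') y.2) =
   \prod_(y <- L' ++ (i, c) :: R') y.2 + tau (a * b) *: (\prod_(y <- L') y.2 * \prod_(y <- R') y.2).
  rewrite big_cat big_cons.
  set PL := \prod_(y <- L') y.2; set PR := \prod_(y <- R') y.2.
  have e1 : c * PR = a * (b * PR) - tau (a * b) *: PR.
    by rewrite /c mulrBl -scalerAl mul1r mulrA.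
  transitivity (PL * (c * PR) + tau (a * b) *: (PL * PR)); last by [].
  by rewrite e1 mulrBr mulrZr subrK -mulrA.
rewrite linearD linearZ /= (hfree (s := L' ++ (i, c) :: R')) //; last first.
- move=> y; rewrite mem_cat inE => /orP[hy|/orP[/eqP->|hy]].
  + by apply: hcL; rewrite mem_cat hy.
  + split; first by apply: hS; [case: ha|case: hb].
    by rewrite /c linearB linearZ tau1; apply/eqP; rewrite subr_eq0; apply/eqP; exact: esym (mulr1 _).
  + by apply: hcL; rewrite mem_cat hy orbT.
- rewrite /alternating sorted_cat_cons hpa andbT.
  by move: hr; case: (L') => [|y s] //=; rewrite !rcons_path.
- by rewrite -size_eq0 size_cat /= addnS.
move=> e; rewrite add0r.
transitivity (tau (a * b) * (if cond L' R' then Zp L' R' else 0)).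
  by congr (_ * _); exact: e.
rewrite /cond /Zp big_cons.
by case: ifP => _; rewrite ?mulr0.
Qed.
End FreeLR.


Section RingLists.
Variable R : pzRingType.
Implicit Types (s : seq (bool * R)).

Lemma telescope s (f : R -> R) :
  \prod_(x <- s) x.2 - \prod_(x <- map (fun x => (x.1, f x.2)) s) x.2 =
  \sum_(j < size s) \prod_(x <- take j (map (fun x => (x.1, f x.2)) s)) x.2 *
     ((nth (false, 0) s j).2 - f (nth (false, 0) s j).2) * \prod_(x <- drop j.+1 s) x.2.
Proof.
elim: s => [|x s IH]; first by rewrite !big_nil subrr big_ord0.
set F := fun x : bool * R => (x.1, f x.2).
set D := fun j => (nth (false, 0) s j).2 - f (nth (false, 0) s j).2.
rewrite big_ord_recl.
rewrite (eq_bigr (fun j : 'I_(size s) => f x.2 * (\prod_(y <- take j (map F s)) y.2 * D j *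
     \prod_(y <- drop j.+1 s) y.2))); last first.
  by move=> j _ /=; rewrite big_cons !mulrA.
rewrite -big_distrr -IH /= !big_cons big_nil mul1r drop0.
by rewrite mulrBr mulrBl addrA subrK.
Qed.

Lemma prod_nth s : \prod_(i < size s) (nth (false, 0) s i).2 = \prod_(x <- s) x.2.
Proof. by rewrite (big_nth (false, 0)) big_mkord. Qed.

Lemma prod_ins s (j : nat) (y : R) : (j < size s)%N ->
  \prod_(i < size s) (if (i : nat) == j then y else (nth (false, 0) s i).2) =
  \prod_(x <- take j s) x.2 * y * \prod_(x <- drop j.+1 s) x.2.
Proof.
elim: s j => [|x s IH] [|j] hj //.
  rewrite big_ord_recl (eq_bigr (fun i : 'I_(size s) => (nth (false,0) s i).2)); last by move=> i _.
  by rewrite prod_nth /= big_nil mul1r drop0.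
rewrite big_ord_recl (eq_bigr (fun i : 'I_(size s) =>
   if (i : nat) == j then y else (nth (false,0) s i).2)); last by move=> i _.
by rewrite IH // /= big_cons !mulrA.
Qed.
Lemma prod_ins_ord s (j : 'I_(size s)) (y : R) :
  \prod_(i < size s) (if i == j then y else (nth (false, 0) s i).2) =
  \prod_(x <- take j s) x.2 * y * \prod_(x <- drop j.+1 s) x.2.
Proof. by rewrite -prod_ins. Qed.

End RingLists.

Lemma altE (A : lalgType CC) (u : seq (bool * A)) :
  alternating u = sorted (fun x y : bool => x != y) (map fst u).
Proof. by rewrite /alternating sorted_map. Qed.

Lemma zip_map1 (A : lalgType CC) (tau : A -> CC) (F : A -> A) (X Y : seq (bool * A)) :
  (forall a b, tau (F a * b) = tau (a * b)) ->
  \prod_(p <- zip (map (fun x => (x.1, F x.2)) X) Y) tau (p.1.2 * p.2.2) =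
  \prod_(p <- zip X Y) tau (p.1.2 * p.2.2).
Proof.
move=> h; elim: X Y => [|x X IH] [|y Y] //.
by rewrite map_cons /= !big_cons IH h.
Qed.

Lemma mapF_fst (A : Type) (F : A -> A) (X : seq (bool * A)) :
  map fst (map (fun x => (x.1, F x.2)) X) = map fst X.
Proof. by rewrite -map_comp. Qed.

Lemma tau_split (A : lalgType CC) (tau : {linear A -> CC^o}) (a p b : A) :
  tau ((a - p) * b) = 0 -> tau (p * b) = tau (a * b).
Proof. by move=> h; rewrite -[a in RHS](subrK p) mulrDl linearD h add0r. Qed.

Lemma final_step (A : lalgType CC) (tau tau' : {linear A -> CC^o})
  (PL0 PL PR v aj : A) (c1 c2 : bool) (Z Z0 : CC) :
  tau' (PL0 * v * PR) = (if c1 then Z0 * tau' v else 0) ->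
  tau (PL * PR) = (if c2 then Z else 0) ->
  c1 = c2 -> Z0 = Z -> tau' v = tau' aj ->
  (forall x y : A, x * (tau' aj) %:A * y = tau' aj *: (x * y)) ->
  tau' (PL0 * v * PR) = tau (PL * (tau' aj)%:A * PR).
Proof.
move=> h1 h2 hc hZ hv hs; rewrite h1 hs linearZ h2 hc hZ hv.
case: ifP => _; [exact: mulrC | exact: esym (mulr0 _)].
Qed.

Lemma map_fst_cons (T : Type) (x : bool) (y : T) (R : seq (bool * T)) :
  map fst ((x, y) :: R) = x :: map fst R.
Proof. by []. Qed.

Lemma scal_mid k l (x y : ncpoly k l) (t : CC) : x * t%:A * y = t *: (x * y).
Proof. by rewrite mulrZr mulr1 -scalerAl. Qed.

Unset Implicit Arguments.
Set Strict Implicit.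
Theorem lemma3p7 (k k' l l' : nat) (hk : (k' <= k)%N) (hl : (l' <= l)%N)
  (tau tau' : {linear ncpoly k l -> CC^o})
  (tau1 : tau 1 = 1) (tau'1 : tau' 1 = 0)
  (hI : forall p, Ideal k' l' p -> tau p = 0)
  (hK : forall p, KerAlg k' l' p -> tau' p = 0)
  (hB : free_typeB tau tau' (@Alg k l) (@Vsp k l k' l')) :
  inf_free tau tau' (@Alg k l).
Proof.
have [hfree htB] := hB.
have hS : forall h a b, @Alg k l h a -> @Alg k l h b -> @Alg k l h (a * b - tau (a * b) *: 1).
  case=> a b ha hb; apply: polys_inB; by [apply: polys_inM | apply/polys_inZ/polys_in1].
have hAlg0 : forall h a, @Alg k l h a -> @Alg k l h (pr0 k' l' a).
  by case=> a ha; exact (@pr0_alg k l k' l' _ a ha).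
have hAlg1 : forall h a, @Alg k l h a -> @Alg k l h (a - pr0 k' l' a).
  by case=> a ha; (apply: polys_inB; [exact: ha | exact (@pr0_alg k l k' l' _ a ha)]).
have htau0 : forall a b, tau (pr0 k' l' a * b) = tau (a * b).
  move=> a b.
  have h0 := hI _ (IdealMr b (pr1_ideal k' l' a)).
  exact (@tau_split _ tau a (pr0 k' l' a) b h0).
have htp0 : forall a, tau' (pr0 k' l' a) = 0.
  by move=> a; apply: hK; exact (@pr0_ker k l k' l' a).
have htc0 : forall a, tau a = 0 -> tau (pr0 k' l' a) = 0.
  by move=> a ha; rewrite -[pr0 k' l' a]mulr1 htau0 mulr1.
move=> s sne salt scent a.
rewrite /a prod_nth; split; first exact: hfree.
have e := telescope s (pr0 k' l').
have -> : \prod_(x <- s) x.2 = \prod_(x <- map (fun x : bool * ncpoly k l => (x.1, pr0 k' l' x.2)) s) x.2 +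
    (\prod_(x <- s) x.2 - \prod_(x <- map (fun x : bool * ncpoly k l => (x.1, pr0 k' l' x.2)) s) x.2) by rewrite addrC subrK.
rewrite linearD e linear_sum.
have -> : tau' (\prod_(x <- map (fun x : bool * ncpoly k l => (x.1, pr0 k' l' x.2)) s) x.2) = 0.
  apply: hK; rewrite big_seq; apply: big_ind => [|u v|y]; [exact: polys_in1|exact: polys_inM|].
  by case/mapP => z _ ->; exact (@pr0_ker k l k' l' z.2).
rewrite add0r; apply: eq_bigr => j _.
rewrite (prod_ins_ord j).
set xj := nth (false, 0) s j.
have xjs : xj \in s by apply: mem_nth.
have hs : take j s ++ (xj.1, xj.2) :: drop j.+1 s = s.
  by rewrite -surjective_pairing /xj -drop_nth ?cat_take_drop.
have altF : alternating (take j s ++ (xj.1, xj.2) :: drop j.+1 s) by rewrite hs.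
have centF : centered_in tau (@Alg k l) (take j s ++ drop j.+1 s).
  by move=> y; rewrite mem_cat => /orP[/mem_take|/mem_drop]; apply: scent.
have altB : alternating (take j (map (fun x : bool * ncpoly k l => (x.1, pr0 k' l' x.2)) s) ++ (xj.1, xj.2 - pr0 k' l' xj.2) :: drop j.+1 s).
  rewrite altE map_cat -map_take mapF_fst -map_cat.
  have -> : map fst (take j s ++ (xj.1, xj.2 - pr0 k' l' xj.2) :: drop j.+1 s) =
            map fst (take j s ++ (xj.1, xj.2) :: drop j.+1 s).
    by rewrite !map_cat !map_fst_cons.
  by rewrite -altE hs.
have centB : centered_in tau (@Alg k l) (take j (map (fun x : bool * ncpoly k l => (x.1, pr0 k' l' x.2)) s) ++ drop j.+1 s).
  move=> y; rewrite mem_cat => /orP[/mem_take/mapP [z zs ->]|/mem_drop]; last exact: scent.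
  have [hz1 hz2] := scent z zs; split; [exact: hAlg0 hz1 | exact: htc0 hz2].
have VB : Vsp k' l' xj.1 (xj.2 - pr0 k' l' xj.2).
  have [hx1 _] := scent xj xjs.
  by split; [exact: pr1_ideal | exact: hAlg1 hx1].
have H1 := htB _ _ _ _ altB centB VB.
have H2 := freeLR tau1 hfree hS altF centF.
refine (final_step H1 H2 _ _ _ _).
- by rewrite /cond -map_take size_map -map_rev mapF_fst.
- by rewrite -map_take -map_rev; apply: zip_map1.
- by rewrite linearB htp0 subr0.
- by move=> x y; apply: scal_mid.
Qed.
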